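(* A word $w$ over $\{a,b\}$ is good if and only if $w=\epsilon$ or there exist integers $n,e,i,f$ with $e\ge0$, $0\le i,f\le n$, and ($e=0 \Rightarrow n=\max(i,f)$), such that $w=a^i(ba^n)^eba^f$ or $w=b^i(ab^n)^eab^f$.
   Context: Let $E$ be the morphism exchanging $a$ and $b$, and $\tilde w$ the mirror image (reversal) of $w$. A word $w$ over $\{a,b\}$ is bad if one of $w,\tilde w,E(w),E(\tilde w)$ has a factor of the form $a^kb^h$ with $k,h\ge 2$, or of the form $a^kba^lb^m$ with $k>l\ge 1$, $m\ge1$; $w$ is good if it is not bad. $\epsilon$ denotes the empty word. *)

(* Defs.v *)
From HB Require Import structures.
From mathcomp Require Import all_boot.
Set Implicit Arguments. Unset Strict Implicit. Unset Printing Implicit Defensive.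

Inductive letter := la | lb.

Definition letter_eqb (x y : letter) : bool :=
  match x, y with la, la | lb, lb => true | _, _ => false end.
Lemma letter_eqP : Equality.axiom letter_eqb.
Proof. by case; case; constructor. Qed.
HB.instance Definition _ := hasDecEq.Build letter letter_eqP.

Definition word := seq letter.

Definition swap (x : letter) : letter := if x is la then lb else la.
Definition E (w : word) : word := map swap w.

Definition pw (x : letter) (n : nat) : word := nseq n x.

Definition has_bad_factor (v : word) : Prop :=
  (exists k h, 2 <= k /\ 2 <= h /\ infix (pw la k ++ pw lb h) v) \/
  (exists k l m, l < k /\ 1 <= l /\ 1 <= m /\
      infix (pw la k ++ [:: lb] ++ pw la l ++ pw lb m) v).

Definition bad (w : word) : Prop :=
  has_bad_factor w \/ has_bad_factor (rev w) \/
  has_bad_factor (E w) \/ has_bad_factor (E (rev w)).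

Definition good (w : word) : Prop := ~ bad w.

(* Main.v *)
Require Import Defs.
From mathcomp Require Import all_boot.
From mathcomp Require Import zify.
Set Implicit Arguments. Unset Strict Implicit.

Definition fam (x y : letter) (w : word) : Prop :=
  exists n e i f : nat, i <= n /\ f <= n /\ (e = 0 -> n = maxn i f) /\
    w = pw x i ++ flatten (nseq e (y :: pw x n)) ++ y :: pw x f.

Lemma two (x y z : letter) : x != y -> z = x \/ z = y.
Proof. by case: x; case: y; case: z; auto. Qed.

Lemma run_eq x y k i s t : x != y -> pw x k ++ y :: s = pw x i ++ y :: t -> k = i /\ s = t.
Proof.
move=> nxy; elim: k i => [|k IH] [|i] //=.
- by case.
- by case=> e; rewrite e eqxx in nxy.
- by case=> e; rewrite e eqxx in nxy.
- by case=> /IH [-> ->].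
Qed.

Lemma headnx x y n t u : x != y -> pw x n ++ t = y :: u -> n = 0.
Proof. by move=> nxy; case: n => //= n [e]; rewrite e eqxx in nxy. Qed.

Lemma headY (y : letter) (X F : word) e : exists s, flatten (nseq e (y :: X)) ++ y :: F = y :: s.
Proof. by case: e => [|e] /=; eexists. Qed.

Lemma flat1 (y : letter) e : flatten (nseq e [:: y]) = nseq e y.
Proof. by elim: e => //= e ->. Qed.

Lemma nseqSr (y : letter) e : nseq e y ++ [:: y] = nseq e.+1 y.
Proof. by elim: e => //= e ->. Qed.

Lemma flat_comm (s : word) e : flatten (nseq e s) ++ s = s ++ flatten (nseq e s).
Proof. elim: e => [|e IH] /=; first by rewrite cats0. by rewrite -catA IH. Qed.

Lemma rev_flat (s : word) e : rev (flatten (nseq e s)) = flatten (nseq e (rev s)).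
Proof. elim: e => //= e IH. by rewrite rev_cat IH flat_comm. Qed.

Lemma flat_rot (y : letter) (X : word) e : flatten (nseq e (y :: X)) ++ [:: y] = y :: flatten (nseq e (X ++ [:: y])).
Proof. elim: e => //= e IH. by rewrite -catA IH -catA. Qed.

Lemma fam_rev x y w : fam x y w -> fam x y (rev w).
Proof.
case=> [n [e [i [f [hi [hf [he ->]]]]]]].
exists n, e, f, i; do 3!(split; first by try (move=> /he ->); lia).
rewrite !rev_cat rev_cons rev_flat /pw !rev_nseq rev_cons rev_nseq -cats1 -catA.
rewrite -catA cat1s -cat_cons. by rewrite -cats1 -flat_rot -!catA.
Qed.

Lemma fam_E x y w : fam x y w -> fam (swap x) (swap y) (E w).
Proof.
case=> [n [e [i [f [hi [hf [he ->]]]]]]].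
exists n, e, i, f; split=> //; split=> //; split=> //.
by rewrite /E /pw !map_cat map_flatten !map_nseq /= !map_nseq.
Qed.

Definition hbf (x y : letter) (v : word) : Prop :=
  (exists k h, 2 <= k /\ 2 <= h /\ infix (pw x k ++ pw y h) v) \/
  (exists k l m, l < k /\ 1 <= l /\ 1 <= m /\
      infix (pw x k ++ [:: y] ++ pw x l ++ pw y m) v).

Lemma hbf_mono x y u v : (forall p : word, infix p u -> infix p v) -> hbf x y u -> hbf x y v.
Proof.
move=> H [[k [h [? [? /H ?]]]]|[k [l [m [? [? [? /H ?]]]]]]].
  by left; exists k, h.
by right; exists k, l, m.
Qed.

Lemma infix_map (f : letter -> letter) (u v : word) : infix u v -> infix (map f u) (map f v).
Proof.
move=> /infixP [s [s' ->]]; apply/infixP; exists (map f s), (map f s').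
by rewrite !map_cat.
Qed.

Lemma hbf_swap x y v : hbf x y v -> hbf (swap x) (swap y) (E v).
Proof.
move=> [[k [h [? [? H]]]]|[k [l [m [? [? [? H]]]]]]].
  left; exists k, h; do 2!split=> //.
  by move: (infix_map swap H); rewrite /pw !map_cat !map_nseq.
right; exists k, l, m; split; [done|split; [done|split; [done|]]].
by move: (infix_map swap H); rewrite /pw !map_cat !map_nseq.
Qed.

Lemma hbf_bad x y v : x != y -> hbf x y v -> bad v.
Proof.
case: x; case: y => //= _ H; first by left.
by right; right; left; exact: (hbf_swap H).
Qed.

Lemma hbf_rev_bad x y v : x != y -> hbf x y (rev v) -> bad v.
Proof.
case: x; case: y => //= _ H; first by right; left.
by right; right; right; exact: (hbf_swap H).
Qed.

Lemma bad_cons z w : bad w -> bad (z :: w).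
Proof.
have L : forall (p u : word) a, infix p u -> infix p (a :: u).
  by move=> p u a H; rewrite -cat1s; apply: infix_catl.
have R : forall (p u : word) a, infix p u -> infix p (rcons u a).
  by move=> p u a H; rewrite -cats1; apply: infix_catr.
case=> [H|[H|[H|H]]].
- by left; apply: hbf_mono H => p /L.
- by right; left; apply: hbf_mono H => p; rewrite rev_cons => /R.
- by right; right; left; apply: hbf_mono H => p /(L _ _ (swap z)).
- by right; right; right; apply: hbf_mono H => p; rewrite /E rev_cons map_rcons => /R.
Qed.

Lemma bad_P1 x y k h (s : word) : x != y -> 2 <= k -> 2 <= h -> bad (pw x k ++ pw y h ++ s).
Proof.
move=> nxy hk hh; apply: (hbf_bad nxy); left; exists k, h; do 2!split=> //.
by apply/infixP; exists [::], s; rewrite cat0s !catA.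
Qed.

Lemma bad_P2 x y k l m (s : word) : x != y -> l < k -> 1 <= l -> 1 <= m ->
  bad (pw x k ++ [:: y] ++ pw x l ++ pw y m ++ s).
Proof.
move=> nxy ? ? ?; apply: (hbf_bad nxy); right; exists k, l, m; split; [done|split; [done|split; [done|]]].
by apply/infixP; exists [::], s; rewrite cat0s !catA.
Qed.

Lemma bad_RP2 x y k l (s : word) : x != y -> l < k -> 1 <= l ->
  bad (y :: pw x l ++ y :: pw x k ++ s).
Proof.
move=> nxy ? ?; apply: (hbf_rev_bad nxy); right; exists k, l, 1; split; [done|split; [done|split; [done|]]].
rewrite -infix_revLR.
have -> : rev (pw x k ++ [:: y] ++ pw x l ++ pw y 1) = y :: pw x l ++ y :: pw x k.
  by rewrite !rev_cat /pw !rev_nseq /= -!catA.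
by apply/infixP; exists [::], s; rewrite /= -catA.
Qed.

Lemma step x y z w : x != y -> fam x y w ->
  fam x y (z :: w) \/ fam y x (z :: w) \/ bad (z :: w).
Proof.
move=> nxy [n [e [i [f [hi [hf [he ->]]]]]]].
have nyx : y != x by rewrite eq_sym.
case: (two z nxy) => ->.
- case: (ltnP i n) => [ilt|ige].
    left; exists n, e, i.+1, f; split; first done; split; first done.
    by split; first (move=> /he; lia).
  have ein : i = n by lia.
  subst i; case: e he => [|e] he.
    left; exists n.+1, 0, n.+1, f; split; first done; split; first lia.
    by split; first (move=> _; lia).
  case: n hi hf ige he => [|n] hi hf ige he.
    have f0 : f = 0 by lia.
    subst f; right; left; exists e.+2, 0, 0, e.+2.
    split; first done; split; first done; split; first by move=> _; lia.
    by rewrite /pw /= flat1 nseqSr.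
  right; right.
  have [s hs] := headY y (pw x n.+1) (pw x f) e.
  suff -> : x :: pw x n.+1 ++ flatten (nseq e.+1 (y :: pw x n.+1)) ++ y :: pw x f =
      pw x n.+2 ++ [:: y] ++ pw x n.+1 ++ pw y 1 ++ s by apply: bad_P2.
  by rewrite /= -hs -!catA.
- case: i hi he => [|i] hi he.
    case: e he => [|e] he.
      have nf : n = f by move: (he erefl); lia.
      subst n; case: f hi hf he => [|[|f]] hi hf he.
      + left; exists 0, 1, 0, 0; split; first done; split; first done.
        by split; first (move=> ?; lia).
      + right; left; exists 2, 0, 2, 0; split; first done; split; first done.
        by split; first (move=> ?; lia).
      + right; right.
        suff -> : y :: pw x 0 ++ flatten (nseq 0 (y :: pw x f.+2)) ++ y :: pw x f.+2
           = pw y 2 ++ pw x 2 ++ pw x f by apply: bad_P1.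
        by [].
    case: n hi hf he => [|[|n]] hi hf he.
    + have f0 : f = 0 by lia.
      subst f; left; exists 0, e.+2, 0, 0; split; first done; split; first done.
      by split; first (move=> ?; lia).
    + case: e he => [|e] he.
        case: f hf he => [|[|f]] hf he; last lia.
          right; left; exists 2, 0, 2, 1; split; first done; split; first done.
          by split; first (move=> ?; lia).
        right; right.
        suff -> : y :: pw x 0 ++ flatten (nseq 1 (y :: pw x 1)) ++ y :: pw x 1
          = pw y 2 ++ [:: x] ++ pw y 1 ++ pw x 1 ++ [::] by apply: bad_P2.
        by [].
      right; right.
      suff -> : y :: pw x 0 ++ flatten (nseq e.+2 (y :: pw x 1)) ++ y :: pw x f
          = pw y 2 ++ [:: x] ++ pw y 1 ++ pw x 1 ++ (flatten (nseq e (y :: pw x 1)) ++ y :: pw x f)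
        by apply: bad_P2.
      by [].
    + right; right.
      suff -> : y :: pw x 0 ++ flatten (nseq e.+1 (y :: pw x n.+2)) ++ y :: pw x f
          = pw y 2 ++ pw x 2 ++ (pw x n ++ flatten (nseq e (y :: pw x n.+2)) ++ y :: pw x f)
        by apply: bad_P1.
      by rewrite /= -!catA.
  case: (ltnP i.+1 n) => [ilt|ige].
    right; right.
    case: e he => [|e] he.
      have fn : f = n by move: he => /(_ erefl); lia.
      subst f.
      suff -> : y :: pw x i.+1 ++ flatten (nseq 0 (y :: pw x n)) ++ y :: pw x n
          = y :: pw x i.+1 ++ y :: pw x n ++ [::] by apply: bad_RP2.
      by rewrite cats0.
    suff -> : y :: pw x i.+1 ++ flatten (nseq e.+1 (y :: pw x n)) ++ y :: pw x f
        = y :: pw x i.+1 ++ y :: pw x n ++ (flatten (nseq e (y :: pw x n)) ++ y :: pw x f)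
      by apply: bad_RP2.
    by rewrite /= -!catA.
  have ein : i.+1 = n by lia.
  left; exists n, e.+1, 0, f; split; first done; split; first done.
  split; first done.
  by rewrite ein /= -!catA.
Qed.

Lemma mem_pw (x y : letter) n : (y \in pw x n) -> y = x.
Proof. by rewrite /pw mem_nseq => /andP [_ /eqP]. Qed.

Lemma fam_shape x y w : fam x y w -> exists n e i f, i <= n /\ f <= n /\
   (e = 0 -> n = maxn i f) /\
   ((e = 0 /\ w = pw x i ++ y :: pw x f) \/
    (exists s, 0 < e /\ w = pw x i ++ y :: pw x n ++ y :: s)).
Proof.
move=> [n [e [i [f [hi [hf [he ->]]]]]]].
exists n, e, i, f; do 3!(split=> //).
case: e he => [|e] he; first by left.
right; have [s hs] := headY y (pw x n) (pw x f) e.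
by exists s; split=> //; rewrite /= -!catA hs.
Qed.

Lemma famyy x y s : x != y -> fam x y (y :: y :: s) -> x \notin s.
Proof.
move=> nxy [n [e [i [f [hi [hf [he H]]]]]]].
have nyx : y != x by rewrite eq_sym.
case: i hi he H => [|i] hi he H; last by case: H => /eqP; rewrite (negbTE nyx).
case: e he H => [|e] he /= H.
  case: H => H; case: f {hf he} H => // f [/eqP].
  by rewrite (negbTE nyx).
case: H; case: n hi hf he => [|n] hi hf he; last first.
  by move=> [/eqP]; rewrite (negbTE nyx).
have f0 : f = 0 by lia.
subst f; rewrite /= flat1 nseqSr => [[->]].
by rewrite mem_nseq negb_and nxy orbT.
Qed.

Lemma np1 x y k h t : x != y -> 2 <= k -> 2 <= h -> ~ fam x y (pw x k ++ pw y h ++ t).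
Proof.
move=> nxy hk hh /fam_shape [n [e [i [f [hi [hf [he [[_ H]|[s [_ H]]]]]]]]]].
  case: h hh H => [|[|h]] // hh H.
  have [ki H2] := run_eq nxy H.
  move: H2; case: f {hf he H} => [|f] /= H2; first discriminate.
  by case: H2 => /eqP; rewrite eq_sym (negbTE nxy).
case: h hh H => [|[|h]] // hh H.
have [ki H2] := run_eq nxy H.
have n0 := headnx nxy (esym H2); lia.
Qed.

Lemma np2 x y k l m t : x != y -> l < k -> 1 <= l -> 1 <= m ->
  ~ fam x y (pw x k ++ [:: y] ++ pw x l ++ pw y m ++ t).
Proof.
move=> nxy hk hl hm /fam_shape [n [e [i [f [hi [hf [he [[_ H]|[s [_ H]]]]]]]]]].
  have [ki H2] := run_eq nxy H.
  have : y \in pw x f by rewrite -H2; case: m hm {H H2} => // m _; rewrite mem_cat inE eqxx orbT.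
  by move/mem_pw/eqP; rewrite eq_sym (negbTE nxy).
case: m hm H => [|m] // hm H.
have [ki H2] := run_eq nxy H.
have [ln _] := run_eq nxy H2; lia.
Qed.

Lemma np1' x y k h t : x != y -> 2 <= k -> 2 <= h -> ~ fam x y (pw y k ++ pw x h ++ t).
Proof.
move=> nxy hk hh; case: k hk => [|[|k]] // _ H.
have := famyy nxy H; rewrite mem_cat; case: h hh {H} => // h _.
by rewrite mem_cat inE eqxx /= orbT.
Qed.

Lemma np2' x y k l m t : x != y -> l < k -> 1 <= l ->
  ~ fam x y (pw y k ++ [:: x] ++ pw y l ++ pw x m ++ t).
Proof.
move=> nxy hk hl; case: k hk => [|[|k]] hk H; try lia.
by have := famyy nxy H; rewrite mem_cat /= inE eqxx /= orbT.
Qed.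

Lemma fam_behead x y z v : fam x y (z :: v) -> v = [::] \/ fam x y v \/ fam y x v.
Proof.
move=> [n [e [i [f [hi [hf [he H]]]]]]].
case: i hi he H => [|i] hi he H.
  case: e he H => [|e] he /= H.
    case: H => _ ->; case: f {hf he} => [|f]; first by left.
    right; right; exists 0, f, 0, 0; split; first done; split; first done.
    split; first done.
    by rewrite /= flat1 nseqSr.
  case: H => _ ->; right; left; exists n, e, n, f; split; first done; split; first done.
  split; first (move=> _; lia).
  by rewrite -catA.
case: H => _ ->; right; left.
case: e he => [|e] he.
  exists (maxn i f), 0, i, f; split; first lia; split; first lia.
  by split.
exists n, e.+1, i, f; split; first lia; split; first lia.
by split; first (move=> ?; lia).
Qed.

Definition pat (x y : letter) (p : word) : Prop :=
  (exists k h, 2 <= k /\ 2 <= h /\ p = pw x k ++ pw y h) \/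
  (exists k l m, l < k /\ 1 <= l /\ 1 <= m /\ p = pw x k ++ [:: y] ++ pw x l ++ pw y m).

Lemma nopre x y p t : x != y -> fam x y (p ++ t) -> ~ pat x y p /\ ~ pat y x p.
Proof.
move=> nxy H; have nyx : y != x by rewrite eq_sym.
split.
  case=> [[k [h [h1 [h2 ep]]]]|[k [l [m [h1 [h2 [h3 ep]]]]]]]; subst p; move: H.
    by rewrite -catA; exact: (np1 nxy h1 h2).
  by rewrite -!catA; exact: (np2 nxy h1 h2 h3).
case=> [[k [h [h1 [h2 ep]]]]|[k [l [m [h1 [h2 [h3 ep]]]]]]]; subst p; move: H.
  by rewrite -catA; exact: (np1' nxy h1 h2).
by rewrite -!catA; exact: (np2' nxy h1 h2).
Qed.

Lemma noinfix v : forall x y p, x != y -> fam x y v -> pat x y p \/ pat y x p -> ~ infix p v.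
Proof.
elim: v => [|z v IH] x y p nxy Hf Hp.
  case: Hf => [n [e [i [f [_ [_ [_ H]]]]]]].
  by have := f_equal size H; rewrite !size_cat /=; lia.
rewrite infix_consl => /orP [/prefixP [t ht]|Hi].
  by rewrite ht in Hf; case: (nopre nxy Hf) => H1 H2; case: Hp.
case: (fam_behead Hf) => [v0|[H|H]].
- subst v; move: Hi; rewrite infixs0 => /eqP ep; subst p.
  by case: Hp => [[[k [h [? [? ep]]]]|[k [l [m [? [? [? ep]]]]]]]|[[k [h [? [? ep]]]]|[k [l [m [? [? [? ep]]]]]]]];
     have := f_equal size ep; rewrite /= !size_cat /pw !size_nseq /=; lia.
- exact: (IH x y p nxy H Hp Hi).
- have nyx : y != x by rewrite eq_sym.
  by apply: (IH y x p nyx H _ Hi); case: Hp; auto.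
Qed.

Lemma hbf_pat x y v : hbf x y v -> exists p, pat x y p /\ infix p v.
Proof.
case=> [[k [h [h1 [h2 H]]]]|[k [l [m [h1 [h2 [h3 H]]]]]]].
  by exists (pw x k ++ pw y h); split=> //; left; exists k, h.
by exists (pw x k ++ [:: y] ++ pw x l ++ pw y m); split=> //; right; exists k, l, m.
Qed.

Lemma fam_nohbf x y w : x != y -> fam x y w -> ~ hbf la lb w.
Proof.
move=> nxy Hf /hbf_pat [p [Hp Hi]].
apply: (noinfix nxy Hf _ Hi).
by move: nxy Hp; clear Hf Hi; case: x; case: y => //= _; auto.
Qed.

Lemma fam_good x y w : x != y -> fam x y w -> good w.
Proof.
move=> nxy Hf.
have nxy' : swap x != swap y by move: nxy; clear Hf; case: x; case: y.
case=> [H|[H|[H|H]]].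
- exact: (fam_nohbf nxy Hf H).
- exact: (fam_nohbf nxy (fam_rev Hf) H).
- exact: (fam_nohbf nxy' (fam_E Hf) H).
- exact: (fam_nohbf nxy' (fam_E (fam_rev Hf)) H).
Qed.

Lemma good_nil : good [::].
Proof.
have H : ~ hbf la lb [::].
  case=> [[k [h [h1 [h2 H]]]]|[k [l [m [h1 [h2 [h3 H]]]]]]];
  move: H; rewrite infixs0; case: k h1 => //.
by case=> [|[|[|]]].
Qed.

Definition G (w : word) := w = [::] \/ fam la lb w \/ fam lb la w.

Lemma good_G w : good w -> G w.
Proof.
elim: w => [|z w IH] Hg; first by left.
have Hw : good w by move=> Hb; apply: Hg; apply: bad_cons.
case: (IH Hw) => [->|[H|H]].
- right; case: z {Hg IH Hw}.
    by right; exists 0, 0, 0, 0.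
  by left; exists 0, 0, 0, 0.
- case: (step z (isT : la != lb) H) => [?|[?|?]]; [by right; left|by right; right|by exfalso].
- case: (step z (isT : lb != la) H) => [?|[?|?]]; [by right; right|by right; left|by exfalso].
Qed.

Lemma G_good w : G w -> good w.
Proof.
case=> [->|[H|H]]; first exact: good_nil.
  exact: (fam_good (isT : la != lb) H).
exact: (fam_good (isT : lb != la) H).
Qed.

Theorem lemma10 (w : word) :
  good w <->
  w = [::] \/
  exists n e i f : nat,
    i <= n /\ f <= n /\ (e = 0 -> n = maxn i f) /\
    (w = pw la i ++ flatten (nseq e (lb :: pw la n)) ++ lb :: pw la f \/
     w = pw lb i ++ flatten (nseq e (la :: pw lb n)) ++ la :: pw lb f).
Proof.
split.
  move/good_G => [->|[[n [e [i [f [h1 [h2 [h3 h4]]]]]]]|[n [e [i [f [h1 [h2 [h3 h4]]]]]]]]].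
  - by left.
  - by right; exists n, e, i, f; do 3!split=> //; left.
  - by right; exists n, e, i, f; do 3!split=> //; right.
move=> H; apply: G_good.
case: H => [->|[n [e [i [f [h1 [h2 [h3 [h4|h4]]]]]]]]]; first by left.
  by right; left; exists n, e, i, f.
by right; right; exists n, e, i, f.
Qed.
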